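(* Let $s\in\mathbb N$, $2\le q\le s$, let $c\in\mathbb R^s$ be a node vector with distinct entries, $C:=\mathrm{diag}(c_1,\dots,c_s)$, and let $A,B\in\mathbb R^{s\times s}$ and a diagonal matrix $K=\mathrm{diag}(\kappa_{11},\dots,\kappa_{ss})$ satisfy $AV_s=BV_s\mathcal P_s^{-1}+KV_s\tilde E_s$, so that $$\mathcal Q_{q,s}:=V_q^{\mathsf T}BV_s\mathcal P_s^{-1}=V_q^{\mathsf T}(AV_s-KV_s\tilde E_s).$$ (a) $\mathcal Q_{q,s}$ has Hankel form if and only if $V_{q-1}^{\mathsf T}(AC-CA-K)V_{s-1}=0$. (b) If $q=3$, $s=4$, $A$ is lower triangular and $\mathcal Q_{3,4}$ has Hankel form, then $\kappa_{33}=e_3^{\mathsf T}Ke_3=0$.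
   Context: $V_k:=(\mathbb 1,c,c^2,\dots,c^{k-1})\in\mathbb R^{s\times k}$ (componentwise powers), $\mathcal P_k:=\big(\binom{j-1}{i-1}\big)_{i,j=1}^k$, $\tilde E_k:=(i\,\delta_{i+1,j})_{i,j=1}^k$, $e_3$ the third cardinal basis vector. A matrix $X=(x_{ij})$ has Hankel form if $x_{ij}$ depends only on $i+j$. *)

(* Defs.v *)
From mathcomp Require Import all_boot all_order all_algebra.
Set Implicit Arguments. Unset Strict Implicit. Unset Printing Implicit Defensive.
Import Order.TTheory GRing.Theory Num.Theory.
Local Open Scope ring_scope.

(* All indices are 0-based: entry (i,j) here is entry (i+1,j+1) of the paper. *)

Definition Vmx (R : nzRingType) (s k : nat) (c : 'rV[R]_s) : 'M[R]_(s, k) :=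
  \matrix_(i < s, j < k) (c 0 i) ^+ j.

Definition PascalMx (R : nzRingType) (k : nat) : 'M[R]_k :=
  \matrix_(i < k, j < k) ('C(j, i))%:R.

Definition Etilde (R : nzRingType) (k : nat) : 'M[R]_k :=
  \matrix_(i < k, j < k) (if j == i.+1 :> nat then (i.+1)%:R else 0).

Definition hankel (R : nzRingType) (m n : nat) (X : 'M[R]_(m, n)) : Prop :=
  forall (i i' : 'I_m) (j j' : 'I_n), (i + j = i' + j')%N -> X i j = X i' j'.

Definition Qmx (R : comUnitRingType) (s q : nat) (c : 'rV[R]_s) (B : 'M[R]_s)
  : 'M[R]_(q, s) :=
  (Vmx q c)^T *m B *m Vmx s c *m invmx (PascalMx R s).

(* Main.v *)
Require Import Defs.
From mathcomp Require Import all_boot all_order all_algebra.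
From mathcomp Require Import zify ring.
Set Implicit Arguments. Unset Strict Implicit. Unset Printing Implicit Defensive.
Import Order.TTheory GRing.Theory Num.Theory.
Local Open Scope ring_scope.

Lemma hankel_step (R : nzRingType) m n (X : 'M[R]_(m.+1, n.+1)) :
  hankel X <-> (forall i j : nat, (i < m)%N -> (j < n)%N ->
     X (inord i) (inord j.+1) = X (inord i.+1) (inord j)).
Proof.
split.
  move=> H i j hi hj; apply: H; rewrite !inordK; lia.
move=> H.
have claim : forall d i j, (i + d <= m)%N -> (d <= j)%N -> (j <= n)%N ->
    X (inord i) (inord j) = X (inord (i + d)) (inord (j - d)).
  elim=> [|d IH] i j h1 h2 h3; first by rewrite addn0 subn0.
  rewrite (IH i j) ?(leq_trans _ h1) ?(leq_trans _ h2) ?leq_addr //; last by lia.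
  have -> : (j - d = (j - d.+1).+1)%N by lia.
  rewrite H; [|lia|lia].
  by congr (X (inord _) _); lia.
move=> i i' j j' hs.
wlog le : i i' j j' hs / (i <= i')%N.
  move=> W; case: (leqP i i') => h; first exact: W.
  by symmetry; apply: W => //; lia.
rewrite -(inord_val i) -(inord_val j) -(inord_val i') -(inord_val j').
rewrite (claim (i' - i)%N i j); try lia.
  by congr (X (inord _) (inord _)); lia.
all: have := ltn_ord i'; have := ltn_ord j; lia.
Qed.
Lemma KVE_entry (R : comNzRingType) s (c : 'rV[R]_s) (K : 'M[R]_s) :
  is_diag_mx K -> forall k j,
  (K *m Vmx s c *m Etilde R s) k j = K k k * ((j : nat)%:R * c 0 k ^+ j.-1).
Proof.
move=> /is_diag_mxP hK k j.
rewrite mxE.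
have hKV : forall m, (K *m Vmx s c) k m = K k k * c 0 k ^+ m.
  move=> m; rewrite mxE (bigD1 k) //= big1 ?addr0; first by rewrite mxE.
  by move=> l hl; rewrite hK ?mul0r // val_eqE eq_sym.
under eq_bigr do rewrite hKV.
case: j => [[|j] hj] /=.
  by rewrite big1 ?mul0r ?mulr0 // => m _; rewrite mxE /= mulr0.
have hj' : (j < s)%N by lia.
rewrite (bigD1 (Ordinal hj')) //= big1 ?addr0.
  by rewrite mxE /=; case: eqP => // _; ring.
move=> m hm; rewrite mxE /=.
case: eqP => [e|]; last by rewrite mulr0.
move: hm; rewrite -val_eqE /=; case: e => ->; case/negP; exact/eqP.
Qed.

Lemma key (R : comNzRingType) s q (c : 'rV[R]_(s.+2)) (A K : 'M[R]_(s.+2))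
  (hK : is_diag_mx K) (i j : nat) (hi : (i < q.+1)%N) (hj : (j < s.+1)%N) :
  let Q := (Vmx q.+2 c)^T *m (A *m Vmx s.+2 c - K *m Vmx s.+2 c *m Etilde R s.+2) in
  Q (inord i) (inord j.+1) - Q (inord i.+1) (inord j) =
  ((Vmx q.+1 c)^T *m (A *m diag_mx c - diag_mx c *m A - K) *m Vmx s.+1 c) (inord i) (inord j).
Proof.
move=> Q.
have hQ : forall a b, Q a b = \sum_k c 0 k ^+ a *
   (\sum_l A k l * c 0 l ^+ b - K k k * ((b : nat)%:R * c 0 k ^+ (b : nat).-1)).
  move=> a b; rewrite /Q mxE; apply: eq_bigr => k _.
  rewrite [X in _ * X]mxE [X in _ * (_ + X)]mxE KVE_entry // !mxE.
  by congr (_ * (_ - _)); apply: eq_bigr => l _; rewrite mxE.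
rewrite !hQ -sumrB mxE.
under [RHS]eq_bigr do rewrite !mxE mulr_suml.
rewrite exchange_big /=; apply: eq_bigr => k _.
move/is_diag_mxP: (hK) => hK'.
rewrite !inordK; try lia.
have -> : \sum_l (Vmx q.+1 c)^T (inord i) k * (A *m diag_mx c - diag_mx c *m A - K) k l *
   c 0 l ^+ j =
   \sum_l (c 0 k ^+ i * A k l * c 0 l ^+ j.+1 - c 0 k ^+ i.+1 * A k l * c 0 l ^+ j)
   - \sum_l c 0 k ^+ i * K k l * c 0 l ^+ j.
  rewrite -sumrB; apply: eq_bigr => l _.
  rewrite mul_mx_diag mul_diag_mx !mxE !inordK; try lia.
  rewrite !exprS; ring.
rewrite [X in _ = _ - X](bigD1 k) //= [X in _ = _ - (_ + X)]big1; last first.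
  by move=> l hl; rewrite hK' ?mulr0 ?mul0r // eq_sym val_eqE.
rewrite sumrB addr0.
under [X in _ = X - _ - _]eq_bigr do rewrite -mulrA.
under [X in _ = _ - X - _]eq_bigr do rewrite -mulrA.
rewrite -!mulr_sumr.
case: j hj => [|j] hj /=; rewrite ?mulrS ?exprS; ring.
Qed.

Lemma parta (R : realFieldType) :
  (forall (s q : nat) (c : 'rV[R]_s) (A B K : 'M[R]_s),
      (2 <= q)%N -> (q <= s)%N ->
      injective (fun i : 'I_s => c 0 i) ->
      is_diag_mx K ->
      A *m Vmx s c = B *m Vmx s c *m invmx (PascalMx R s) + K *m Vmx s c *m Etilde R s ->
      (hankel (Qmx q c B) <->
       (Vmx q.-1 c)^T *m (A *m diag_mx c - diag_mx c *m A - K) *m Vmx s.-1 c = 0)).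
Proof.
move=> s q c A B K hq hqs _ hK hAB.
have hAB' : B *m Vmx s c *m invmx (PascalMx R s) = A *m Vmx s c - K *m Vmx s c *m Etilde R s.
  by rewrite hAB addrK.
have hQ : Qmx q c B = (Vmx q c)^T *m (A *m Vmx s c - K *m Vmx s c *m Etilde R s).
  by rewrite -hAB' /Qmx !mulmxA.
rewrite hQ.
case: q hq hqs {hQ} => [|[|q]] // _.
case: s c A B K hK hAB hAB' => [|[|s]] // c A B K hK _ _ hqs.
rewrite hankel_step; split.
  move=> H; apply/matrixP => i j.
  rewrite -(inord_val i) -(inord_val j) -key // ?H ?subrr ?mxE //.
move=> H i j hi hj; apply/eqP; rewrite -subr_eq0 key // H mxE //.
Qed.

Lemma Nentry (R : comNzRingType) s a b (c : 'rV[R]_s) (M : 'M[R]_s) i j :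
  ((Vmx a c)^T *m M *m Vmx b c) i j =
  \sum_k \sum_l c 0 k ^+ i * M k l * c 0 l ^+ j.
Proof.
rewrite mxE; under eq_bigr do rewrite mxE mulr_suml.
rewrite exchange_big; apply: eq_bigr => k _; apply: eq_bigr => l _.
by rewrite !mxE.
Qed.

Lemma ord4_cases (k : 'I_4) :
  k = inord 0 \/ k = inord 1 \/ k = inord 2 \/ k = inord 3.
Proof.
case: k => [[|[|[|[|k]]]] hk].
- by left; apply/val_inj; rewrite /= inordK.
- by right; left; apply/val_inj; rewrite /= inordK.
- by right; right; left; apply/val_inj; rewrite /= inordK.
- by right; right; right; apply/val_inj; rewrite /= inordK.
- by [].
Qed.

Lemma partb (R : realFieldType) :
  (forall (c : 'rV[R]_4) (A B K : 'M[R]_4),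
      injective (fun i : 'I_4 => c 0 i) ->
      is_diag_mx K ->
      A *m Vmx 4 c = B *m Vmx 4 c *m invmx (PascalMx R 4) + K *m Vmx 4 c *m Etilde R 4 ->
      is_trig_mx A ->
      hankel (Qmx 3 c B) ->
      K (inord 2) (inord 2) = 0).
Proof.
move=> c A B K hinj hK hAB hA hH.
have := (proj1 (parta (s:=4) (q:=3) isT isT hinj hK hAB) hH).
set M := (A *m diag_mx c - diag_mx c *m A - K) => hN.
have hNij : forall (i : 'I_2) (j : 'I_3), \sum_k \sum_l c 0 k ^+ i * M k l * c 0 l ^+ j = 0.
  by move=> i j; rewrite -Nentry hN mxE.
have hMe : forall k l, M k l = A k l * c 0 l - c 0 k * A k l - K k l.
  by move=> k l; rewrite /M mul_mx_diag mul_diag_mx !mxE.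
move/is_trig_mxP: hA => hA; move/is_diag_mxP: hK => hK.
have hMz : forall k l : 'I_4, (k < l)%N -> M k l = 0.
  move=> k l hkl; rewrite hMe hA // hK ?mulr0 ?mul0r ?subrr //.
  by rewrite neq_ltn hkl.
pose c0 := c 0 (inord 0); pose c1 := c 0 (inord 1); pose c3 := c 0 (inord 3).
pose f := fun k l : 'I_4 => (c 0 k - c3) * (c 0 l - c0) * (c 0 l - c1).
have hsum : \sum_k \sum_l M k l * f k l = 0.
  have -> : \sum_k \sum_l M k l * f k l =
    \sum_k \sum_l (- (c3 * c0 * c1) * (c 0 k ^+ (inord 0 : 'I_2) * M k l * c 0 l ^+ (inord 0 : 'I_3))
     + (c3 * (c0 + c1) * (c 0 k ^+ (inord 0 : 'I_2) * M k l * c 0 l ^+ (inord 1 : 'I_3))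
     + (- c3 * (c 0 k ^+ (inord 0 : 'I_2) * M k l * c 0 l ^+ (inord 2 : 'I_3))
     + (c0 * c1 * (c 0 k ^+ (inord 1 : 'I_2) * M k l * c 0 l ^+ (inord 0 : 'I_3))
     + (- (c0 + c1) * (c 0 k ^+ (inord 1 : 'I_2) * M k l * c 0 l ^+ (inord 1 : 'I_3))
     + (c 0 k ^+ (inord 1 : 'I_2) * M k l * c 0 l ^+ (inord 2 : 'I_3))))))).
    apply: eq_bigr => k _; apply: eq_bigr => l _.
    rewrite !inordK // /f; ring.
  under eq_bigr do rewrite !big_split /= -!mulr_sumr.
  by rewrite !big_split /= -!mulr_sumr !hNij; ring.
have hf : forall k l : 'I_4, (k != inord 2) || (l != inord 2) -> M k l * f k l = 0.
  move=> k l hkl.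
  have hf0 : forall k, f k (inord 0) = 0 by move=> k'; rewrite /f subrr mulr0 mul0r.
  have hf1 : forall k, f k (inord 1) = 0 by move=> k'; rewrite /f subrr mulr0.
  have hf3 : forall l, f (inord 3) l = 0 by move=> l'; rewrite /f subrr !mul0r.
  move: hkl; case: (ord4_cases k) => [->|[->|[->|->]]]; case: (ord4_cases l) => [->|[->|[->|->]]];
  first [ by rewrite eqxx | move=> _ ];
  first [ by rewrite hf0 mulr0 | by rewrite hf1 mulr0 | by rewrite hf3 mulr0
        | by rewrite hMz ?mul0r // !inordK ].
move: hsum; rewrite (bigD1 (inord 2)) //= [X in _ + X]big1; last first.
  by move=> k hk; apply: big1 => l _; apply: hf; rewrite hk.
rewrite (bigD1 (inord 2)) //= big1; last by move=> l hl; apply: hf; rewrite hl orbT.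
have -> : M (inord 2) (inord 2) = - K (inord 2) (inord 2) by rewrite hMe mulrC subrr sub0r.
rewrite !addr0 /f mulNr => /eqP; rewrite oppr_eq0 !mulf_eq0 !subr_eq0.
have hne : forall m : nat, (m < 4)%N -> m != 2%N -> c 0 (inord 2) != c 0 (inord m).
  move=> m hm hm2; apply/eqP => /hinj /(congr1 (@nat_of_ord 4)); rewrite !inordK //.
  by move=> e; move: hm2; rewrite -e.
by rewrite (negPf (hne 3%N _ _)) ?(negPf (hne 0%N _ _)) ?(negPf (hne 1%N _ _)) // !orbF => /eqP.
Qed.

Theorem theorem6p1 (R : realFieldType) :
  (* (a) *)
  (forall (s q : nat) (c : 'rV[R]_s) (A B K : 'M[R]_s),
      (2 <= q)%N -> (q <= s)%N ->
      injective (fun i : 'I_s => c 0 i) ->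
      is_diag_mx K ->
      A *m Vmx s c = B *m Vmx s c *m invmx (PascalMx R s) + K *m Vmx s c *m Etilde R s ->
      (hankel (Qmx q c B) <->
       (Vmx q.-1 c)^T *m (A *m diag_mx c - diag_mx c *m A - K) *m Vmx s.-1 c = 0))
  /\
  (* (b) *)
  (forall (c : 'rV[R]_4) (A B K : 'M[R]_4),
      injective (fun i : 'I_4 => c 0 i) ->
      is_diag_mx K ->
      A *m Vmx 4 c = B *m Vmx 4 c *m invmx (PascalMx R 4) + K *m Vmx 4 c *m Etilde R 4 ->
      is_trig_mx A ->
      hankel (Qmx 3 c B) ->
      K (inord 2) (inord 2) = 0).
Proof.
split; [exact: parta | exact: partb].
Qed.
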